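(* Let $Q\ge0$, $R>0$, $M\ge0$ be symmetric matrices, $f:\mathbb{R}^n\times\mathbb{R}^m\to\mathbb{R}^n$ smooth, and consider an $s$-stage Runge–Kutta method with coefficients $a_{ij}$, $b_i>0$, step $h>0$ small enough that the constraints $x_{k+1}=x_k+h\sum_{i=1}^s b_if(x_{ki},u_{ki})$, $x_0=a$, $x_{ki}=x_k+h\sum_{j=1}^s a_{ij}f(x_{kj},u_{kj})$ ($0\le k\le N-1$, $1\le i\le s$) determine the vector of internal-stage states $X=(x_{01},\dots,x_{0s},\dots,x_{N-1,1},\dots,x_{N-1,s})$ and the node states $x_k$ as smooth functions $X=F(U)$, $x_k=F_d^k(U)$ of the vector of internal-stage controls $U=(u_{01},\dots,u_{0s},\dots,u_{N-1,s})$. Let $$J_d(U)=\tfrac12 F(U)^T\mathcal{Q}F(U)+\tfrac12U^T\mathcal{R}U+\tfrac12F_d^N(U)^TMF_d^N(U),$$ where $\mathcal{Q}$ (resp. $\mathcal{R}$) is the block-diagonal matrix whose diagonal blocks are, for each $k=0,\dots,N-1$ and $i=1,\dots,s$ in order, $hb_iQ$ (resp. $hb_iR$). Fix $U^0$, set $X^0=F(U^0)$, $x_N^0=F_d^N(U^0)$, and let $\tilde U$ be a minimizer of $\tfrac12X^T\mathcal{Q}X+\tfrac12U^T\mathcal{R}U+\tfrac12x_N^TMx_N$ over the tangent plane $X-X^0=F'(U^0)(U-U^0)$, $x_N-x_N^0=(F_d^N)'(U^0)(U-U^0)$ (the ILQR step). Then, with $$W(U^0)=F'(U^0)^T\mathcal{Q}F'(U^0)+\mathcal{R}+(F_d^N)'(U^0)^TM(F_d^N)'(U^0),$$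 the matrix $W(U^0)$ is symmetric positive definite, $\tilde U$ is unique, and $$\tilde U-U^0=-W(U^0)^{-1}J_d'(U^0);$$ in particular $\tilde U-U^0$ is a descent direction for $J_d$ at $U^0$ (i.e. $J_d'(U^0)^T(\tilde U-U^0)<0$ whenever $J_d'(U^0)\neq0$).
   Context: $J_d$ is the cost of the optimization problem obtained by discretizing, with the given Runge–Kutta method, the problem of minimizing $\int_0^{t_f}(\tfrac12x^TQx+\tfrac12u^TRu)dt+\tfrac12x(t_f)^TMx(t_f)$ subject to $\dot x=f(x,u)$, $x(0)=a$, with $h=t_f/N$. $J_d'$ denotes the gradient of $J_d$ with respect to $U$, and $F'$, $(F_d^N)'$ the Jacobians. *)

(* Defs.v *)
(* Row-vector convention (as in MathComp-Analysis' [jacobian]):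
   vectors are row vectors, and 'd f p v = v *m jacobian f p, so the
   column-convention Jacobian F'(U) of the paper is (jacobian F U)^T. *)
From HB Require Import structures.
From mathcomp Require Import all_boot all_order all_algebra.
From mathcomp Require Import all_classical all_reals all_analysis.
Set Implicit Arguments. Unset Strict Implicit. Unset Printing Implicit Defensive.
Import Order.TTheory GRing.Theory Num.Theory.
Import numFieldNormedType.Exports.
Local Open Scope ring_scope.

Definition qform (R : pzRingType) n (A : 'M[R]_n) (v : 'rV[R]_n) : R :=
  (v *m A *m v^T) 0 0.

Definition sym_psd (R : numDomainType) n (A : 'M[R]_n) : Prop :=
  A^T = A /\ forall v : 'rV[R]_n, 0 <= qform A v.

Definition sym_pd (R : numDomainType) n (A : 'M[R]_n) : Prop :=
  A^T = A /\ forall v : 'rV[R]_n, v != 0 -> 0 < qform A v.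

(* internal stages (k,i), k < N, i < s, are enumerated in the order
   (0,1),...,(0,s),...,(N-1,1),...,(N-1,s) by the index
   mxvec_index k i = k * s + i of 'I_(N*s). *)
Lemma stage_mod_lt (N s : nat) (j : 'I_(N * s)) : (j %% s < s)%N.
Proof.
rewrite ltn_mod; case: s j => // [[k]] /=; by rewrite muln0.
Qed.

Definition stage_i (N s : nat) (j : 'I_(N * s)) : 'I_s :=
  Ordinal (stage_mod_lt j).

Definition stU (R : Type) (N s m : nat)
  (U : 'rV[R]_(\sum_(j < N * s) m)) (k : 'I_N) (i : 'I_s) : 'rV[R]_m :=
  @submxrow R (N * s) (fun _ => m) 1 U (mxvec_index k i).

Definition blkW (R : pzRingType) (N s n : nat) (h : R) (b : 'rV[R]_s)
  (A : 'M[R]_n) : 'M[R]_(\sum_(j < N * s) n) :=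
  @mxdiag R (N * s) (fun _ => n) (fun j => (h * b 0 (stage_i j)) *: A).

Definition RK_constraints (R : pzRingType) (n m s N : nat)
  (f : 'rV[R]_n -> 'rV[R]_m -> 'rV[R]_n) (A : 'M[R]_s) (b : 'rV[R]_s)
  (h : R) (a : 'rV[R]_n)
  (U : 'rV[R]_(\sum_(j < N * s) m)) (X : 'rV[R]_(\sum_(j < N * s) n))
  (x : 'I_N.+1 -> 'rV[R]_n) : Prop :=
  [/\ x ord0 = a,
      forall k : 'I_N, x (lift ord0 k) =
        x (widen_ord (leqnSn N) k)
        + h *: \sum_(i < s) b 0 i *: f (stU X k i) (stU U k i)
    & forall (k : 'I_N) (i : 'I_s), stU X k i =
        x (widen_ord (leqnSn N) k)
        + h *: \sum_(j < s) A i j *: f (stU X k j) (stU U k j)].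

Definition Jd (R : fieldType) (n m s N : nat)
  (F : 'rV[R]_(\sum_(j < N * s) m) -> 'rV[R]_(\sum_(j < N * s) n))
  (FN : 'rV[R]_(\sum_(j < N * s) m) -> 'rV[R]_n)
  (QQ : 'M[R]_(\sum_(j < N * s) n)) (RR : 'M[R]_(\sum_(j < N * s) m))
  (M : 'M[R]_n) (U : 'rV[R]_(\sum_(j < N * s) m)) : R :=
  (1 / 2%:R) * qform QQ (F U) + (1 / 2%:R) * qform RR U
  + (1 / 2%:R) * qform M (FN U).

Definition grad (R : realType) p (g : 'rV[R]_p -> R) (x : 'rV[R]_p) : 'rV[R]_p :=
  (jacobian (fun y => (g y)%:M : 'rV[R]_1) x)^T.

(* Main.v *)
Require Import Defs.
From HB Require Import structures.
From mathcomp Require Import all_boot all_order all_algebra.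
From mathcomp Require Import all_classical all_reals all_analysis.
From mathcomp Require Import ring lra.
Import Order.TTheory GRing.Theory Num.Theory.
Import numFieldNormedType.Exports.
Local Open Scope ring_scope.
Local Open Scope classical_set_scope.
Lemma mx_cont (R : realType) (T : topologicalType) m n (f : T -> 'M[R]_(m,n)) :
  (forall i j, continuous (fun x => f x i j)) -> continuous f.
Proof.
move=> fc x A /= [P Pn sPA].
have : \forall y \near x, forall ij : 'I_m * 'I_n, P ij.1 ij.2 (f y ij.1 ij.2).
  apply: filter_forall => -[i j]; exact: (fc i j x _ (Pn i j)).
apply: filterS => y Hy; apply: sPA => i j; exact: (Hy (i, j)).
Qed.

Lemma cont_sum (R : realType) (T : topologicalType) k (g : 'I_k -> T -> R) :
  (forall i, continuous (g i)) -> continuous (fun x => \sum_i g i x).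
Proof.
elim: k g => [|k IH] g gc.
  under eq_fun do rewrite big_ord0; exact: cst_continuous.
under eq_fun do rewrite big_ord_recr /=.
move=> x; apply: (@continuousD _ _ _ (fun x => \sum_(i < k) g (widen_ord (leqnSn k) i) x) (g ord_max)).
  by apply: IH => i; apply: gc.
exact: gc.
Qed.

Lemma bil_cont (R : realType) q (A : 'M[R]_q) :
  continuous (fun p : 'rV[R]_q * 'rV[R]_q => p.1 *m A *m p.2^T).
Proof.
apply: mx_cont => i j.
have -> : (fun x : 'rV[R]_q * 'rV[R]_q => (x.1 *m A *m x.2^T) i j) =
  (fun x => \sum_k (\sum_l x.1 i l * A l k) * x.2 j k).
  by apply/funext => x; rewrite !mxE; apply: eq_bigr => k _; rewrite !mxE.
apply: cont_sum => k x.
apply: (continuousM (s:=fun x : 'rV[R]_q * 'rV[R]_q => \sum_l x.1 i l * A l k) (t:=fun x => x.2 j k)).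
  apply: cont_sum => l y.
  apply: (continuousM (s:=fun x : 'rV[R]_q * 'rV[R]_q => x.1 i l) (t:=fun _ => A l k)); last exact: cst_continuous.
  apply: (continuous_comp (f:=fst) (g:=fun M : 'rV[R]_q => M i l)); first exact: cvg_fst.
  exact: coord_continuous.
apply: (continuous_comp (f:=snd) (g:=fun M : 'rV[R]_q => M j k)); first exact: cvg_snd.
exact: coord_continuous.
Qed.

Definition bil {R : realType} {q} (A : 'M[R]_q) (u v : 'rV[R]_q) : 'rV[R]_1 :=
  u *m A *m v^T.

Lemma bil_is_bilinear (R : realType) q (A : 'M[R]_q) :
  bilinear_for (GRing.Scale.Law.clone _ _ *:%R _) (GRing.Scale.Law.clone _ _ *:%R _)
    (bil A).
Proof.
split=> [u'|u] a x y /=; rewrite /bil.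
- by rewrite mulmxDl mulmxDl -!scalemxAl.
- by rewrite linearD /= linearZ /= mulmxDr -!scalemxAr.
Qed.

HB.instance Definition _ (R : realType) q (A : 'M[R]_q) :=
  bilinear_isBilinear.Build R 'rV[R]_q 'rV[R]_q 'rV[R]_1 _ _ (bil A)
  (@bil_is_bilinear R q A).

Lemma is_diff_quad (R : realType) p q (A : 'M[R]_q) (G : 'rV[R]_p -> 'rV[R]_q) x :
  differentiable G x ->
  is_diff x (fun y => bil A (G y) (G y))
    (fun v => bil A (G x) ('d G x v) + bil A ('d G x v) (G x)).
Proof.
move=> dG.
have Hb : is_diff (G x, G x) (fun pq : 'rV[R]_q * 'rV[R]_q => bil A pq.1 pq.2)
   (fun pq => bil A (G x) pq.2 + bil A pq.1 (G x)).
  apply: DiffDef.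
    have := @differentiable_bilin R _ _ _ (bil A) (G x, G x) (@bil_cont R q A).
    exact.
  exact: (@diff_bilin R _ _ _ (bil A) (G x, G x) (@bil_cont R q A)).
have HG := differentiableP dG.
exact: (is_diff_comp (is_diff_pair HG HG) Hb).
Qed.

Lemma mx11_tr (R : realType) (X : 'M[R]_1) : X^T = X.
Proof. by apply/matrixP => i j; rewrite !ord1 mxE. Qed.

Lemma bil_sym (R : realType) q (A : 'M[R]_q) u w : A^T = A -> bil A u w = bil A w u.
Proof.
move=> sA; rewrite /bil -[LHS]mx11_tr !trmx_mul trmxK sA mulmxA //.
Qed.

Lemma grad_gen (R : realType) p q r (F : 'rV[R]_p -> 'rV[R]_q)
  (FN : 'rV[R]_p -> 'rV[R]_r) (QQ : 'M[R]_q) (RR : 'M[R]_p) (M : 'M[R]_r) U0 :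
  QQ^T = QQ -> RR^T = RR -> M^T = M ->
  differentiable F U0 -> differentiable FN U0 ->
  grad (fun y => (1 / 2%:R) * qform QQ (F y) + (1 / 2%:R) * qform RR y
                 + (1 / 2%:R) * qform M (FN y)) U0 =
  (jacobian F U0 *m QQ *m (F U0)^T + RR *m U0^T + jacobian FN U0 *m M *m (FN U0)^T)^T.
Proof.
move=> sQ sR sM dF dFN.
set c : R := 1 / 2%:R.
pose G := fun y => c *: bil QQ (F y) (F y) + c *: bil RR y y + c *: bil M (FN y) (FN y).
have GE : (fun y => ((c * qform QQ (F y) + c * qform RR y + c * qform M (FN y))%:M : 'rV[R]_1)) = G.
  apply/funext => y; rewrite /G !raddfD /= -!scale_scalar_mx.
  by rewrite /qform /bil -!mx11_scalar.
rewrite /grad GE.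
have HG : is_diff U0 G (fun v => c *: (bil QQ (F U0) ('d F U0 v) + bil QQ ('d F U0 v) (F U0))
     + c *: (bil RR U0 ('d id U0 v) + bil RR ('d id U0 v) U0)
     + c *: (bil M (FN U0) ('d FN U0 v) + bil M ('d FN U0 v) (FN U0))).
  apply: is_diffD; [apply: is_diffD|]; apply: is_diffZ; apply: is_diff_quad => //.
have dG := @diff_val _ _ _ _ _ _ _ HG.
have did : 'd id U0 = id :> ('rV[R]_p -> 'rV[R]_p) := @diff_val _ _ _ _ _ _ _ (is_diff_id U0).
have E k (A' : 'M[R]_k) a w : A'^T = A' -> c *: (bil A' a w + bil A' w a) = bil A' w a.
  move=> sA; rewrite (@bil_sym R k A' a w sA) -mulr2n -scaler_nat scalerA /c mul1r mulVf ?scale1r //.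
congr (_^T); apply/row_matrixP => i; rewrite rowE mul_rV_lin1 /= dG /= did.
rewrite !E // -(mul_rV_lin1 ('d F U0)) -(mul_rV_lin1 ('d FN U0)) /bil.
by rewrite rowE !mulmxDr !mulmxA.
Qed.

Lemma qform_add (R : realType) q (A : 'M[R]_q) x y : A^T = A ->
  qform A (x + y) = qform A x + 2 * (y *m A *m x^T) 0 0 + qform A y.
Proof.
move=> sA; rewrite /qform !(linearD, mulmxDl, mulmxDr) /=.
have := @bil_sym R q A x y sA; rewrite /bil => ->.
rewrite !mxE; lra.
Qed.

Lemma qformN (R : realType) q (A : 'M[R]_q) x : qform A (- x) = qform A x.
Proof. by rewrite /qform linearN /= mulNmx mulmxN mulNmx opprK. Qed.

Lemma qformZ (R : realType) q (A : 'M[R]_q) (a : R) x : qform (a *: A) x = a * qform A x.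
Proof. by rewrite /qform -scalemxAr -scalemxAl mxE. Qed.

Lemma qform_mxdiag (R : realType) k (p_ : 'I_k -> nat) (D : forall i, 'M[R]_(p_ i))
  (v : 'rV[R]_(\sum_i p_ i)) :
  qform (mxdiag D) v = \sum_i qform (D i) (submxrow v i).
Proof.
rewrite /qform.
transitivity (((\mxrow_j submxrow v j) *m mxdiag D *m (\mxrow_j submxrow v j)^T) 0 0).
  by rewrite submxrowK.
by rewrite mul_mxrow_mxdiag tr_mxrow mul_mxrow_mxcol summxE.
Qed.

Lemma blkW_qform (R : realType) (N s n : nat) (h : R) (b : 'rV[R]_s) (A : 'M[R]_n) v :
  qform (blkW N h b A) v = \sum_j (h * b 0 (stage_i j)) * qform A (submxrow v j).
Proof. by rewrite /blkW qform_mxdiag; apply: eq_bigr => j _; rewrite qformZ. Qed.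

Lemma blkW_tr (R : realType) (N s n : nat) (h : R) (b : 'rV[R]_s) (A : 'M[R]_n) :
  A^T = A -> (blkW N h b A)^T = blkW N h b A.
Proof.
by move=> sA; rewrite /blkW tr_mxdiag; apply: eq_mxdiag => j; rewrite linearZ /= sA.
Qed.

Lemma blkW_psd (R : realType) (N s n : nat) (h : R) (b : 'rV[R]_s) (A : 'M[R]_n) :
  0 < h -> (forall i, 0 < b 0 i) -> sym_psd A -> sym_psd (blkW N h b A).
Proof.
move=> h0 b0 [sA pA]; split; first exact: blkW_tr.
move=> v; rewrite blkW_qform; apply: sumr_ge0 => j _.
by apply: mulr_ge0 => //; apply: ltW; apply: mulr_gt0.
Qed.

Lemma blkW_pd (R : realType) (N s n : nat) (h : R) (b : 'rV[R]_s) (A : 'M[R]_n) :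
  0 < h -> (forall i, 0 < b 0 i) -> sym_pd A -> sym_pd (blkW N h b A).
Proof.
move=> h0 b0 [sA pA]; split; first exact: blkW_tr.
move=> v v0; rewrite blkW_qform.
have [j vj] : exists j, submxrow v j != 0.
  apply/existsP; apply: contraNT v0; rewrite negb_exists => /forallP H.
  rewrite -(submxrowK v); apply/eqP; rewrite -(mxrow0 (q_ := fun _ => n)).
  by apply: eq_mxrow => i; apply/eqP; move: (H i); rewrite negbK.
rewrite (bigD1 j) //=; apply: ltr_pwDl.
  by apply: mulr_gt0; [apply: mulr_gt0|apply: pA].
apply: sumr_ge0 => i _; apply: mulr_ge0; first by apply: ltW; apply: mulr_gt0.
have [->|/pA/ltW//] := eqVneq (submxrow v i) 0.
by rewrite /qform mul0mx mul0mx mxE.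
Qed.

Lemma pd_unit (R : realType) p (W : 'M[R]_p) : sym_pd W -> W \in unitmx.
Proof.
move=> [_ pW]; rewrite -row_free_unit; apply: inj_row_free => v vW0.
apply/eqP; apply: contraT => v0; have := pW v v0.
by rewrite /qform vW0 mul0mx mxE ltxx.
Qed.

Lemma W_qform (R : realType) p q r (QQ : 'M[R]_q) (RR : 'M[R]_p) (M : 'M[R]_r)
  (JF : 'M[R]_(p, q)) (JN : 'M[R]_(p, r)) v :
  qform (JF *m QQ *m JF^T + RR + JN *m M *m JN^T) v =
  qform QQ (v *m JF) + qform RR v + qform M (v *m JN).
Proof.
by rewrite /qform !(mulmxDr, mulmxDl) !trmx_mul !mulmxA !mxE.
Qed.

Lemma W_pd (R : realType) p q r (QQ : 'M[R]_q) (RR : 'M[R]_p) (M : 'M[R]_r)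
  (JF : 'M[R]_(p, q)) (JN : 'M[R]_(p, r)) :
  sym_psd QQ -> sym_pd RR -> sym_psd M ->
  sym_pd (JF *m QQ *m JF^T + RR + JN *m M *m JN^T).
Proof.
move=> [sQ pQ] [sR pR] [sM pM]; split.
  by rewrite !linearD /= !trmx_mul !trmxK sQ sR sM !mulmxA.
move=> v v0; rewrite W_qform.
rewrite -addrA addrC -addrA; apply: ltr_pwDl; first exact: pR.
by apply: addr_ge0.
Qed.

Lemma cost_form (R : realType) p q r (QQ : 'M[R]_q) (RR : 'M[R]_p) (M : 'M[R]_r)
  (JF : 'M[R]_(p, q)) (JN : 'M[R]_(p, r)) X0 xN0 U0 W ds :
  QQ^T = QQ -> RR^T = RR -> M^T = M ->
  W = JF *m QQ *m JF^T + RR + JN *m M *m JN^T ->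
  W *m ds^T = - (JF *m QQ *m X0^T + RR *m U0^T + JN *m M *m xN0^T) ->
  forall U,
  (1 / 2%:R) * qform QQ (X0 + (U - U0) *m JF) + (1 / 2%:R) * qform RR U
    + (1 / 2%:R) * qform M (xN0 + (U - U0) *m JN) =
  ((1 / 2%:R) * qform QQ X0 + (1 / 2%:R) * qform RR U0 + (1 / 2%:R) * qform M xN0
    - (1 / 2%:R) * qform W ds) + (1 / 2%:R) * qform W (U - (U0 + ds)).
Proof.
move=> sQ sR sM hW hd U.
have -> : U = U0 + (U - U0) by rewrite addrC subrK.
move: (U - U0) => d.
have -> : U0 + d - U0 = d by rewrite addrC addKr.
have -> : U0 + d - (U0 + ds) = d + - ds by rewrite opprD addrACA subrr add0r.
have sW : W^T = W.
  by rewrite hW !linearD /= !trmx_mul !trmxK sQ sR sM !mulmxA.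
rewrite !qform_add // qformN.
have h5 := @W_qform R p q r QQ RR M JF JN d; rewrite -hW in h5.
have h4 : (d *m W *m ds^T) 0 0 = - ((d *m JF *m QQ *m X0^T) 0 0 + (d *m RR *m U0^T) 0 0
   + (d *m JN *m M *m xN0^T) 0 0).
  by rewrite -mulmxA hd mulmxN !mulmxDr !mulmxA !mxE.
have h6 : (- ds *m W *m d^T) 0 0 = - (d *m W *m ds^T) 0 0.
  have := @bil_sym R p W d ds sW; rewrite /bil => ->.
  by rewrite mulNmx mulNmx mxE.
have e1 : (d *m JF *m QQ *m X0^T) 0 0 = ((d *m JF) *m QQ *m X0^T) 0 0 by [].
rewrite h6 h4 h5.
lra.
Qed.

Local Close Scope classical_set_scope.
Theorem mainTheorem5 (R : realType) (n m s N : nat)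
  (Q : 'M[R]_n) (Rm : 'M[R]_m) (M : 'M[R]_n)
  (f : 'rV[R]_n -> 'rV[R]_m -> 'rV[R]_n)
  (A : 'M[R]_s) (b : 'rV[R]_s) (h : R) (a : 'rV[R]_n)
  (F : 'rV[R]_(\sum_(j < N * s) m) -> 'rV[R]_(\sum_(j < N * s) n))
  (Fd : 'I_N.+1 -> 'rV[R]_(\sum_(j < N * s) m) -> 'rV[R]_n)
  (U0 : 'rV[R]_(\sum_(j < N * s) m)) :
  (0 < N)%N -> (0 < s)%N ->
  sym_psd Q -> sym_pd Rm -> sym_psd M ->
  (forall p : 'rV[R]_n * 'rV[R]_m,
      differentiable (fun q : 'rV[R]_n * 'rV[R]_m => f q.1 q.2) p) ->
  (forall i : 'I_s, 0 < b 0 i) -> 0 < h ->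
  (* F and Fd solve the Runge-Kutta constraints ... *)
  (forall U, RK_constraints f A b h a U (F U) (fun k => Fd k U)) ->
  (* ... and the constraints determine X and the x_k uniquely ... *)
  (forall U X x, RK_constraints f A b h a U X x ->
      X = F U /\ forall k, x k = Fd k U) ->
  (* ... as smooth (here: differentiable) functions of U *)
  (forall U, differentiable F U) ->
  (forall k U, differentiable (Fd k) U) ->
  let QQ := blkW N h b Q in
  let RR := blkW N h b Rm in
  let FN := Fd ord_max in
  let JF := jacobian F U0 in          (* = F'(U0)^T *)
  let JN := jacobian FN U0 in         (* = (F_d^N)'(U0)^T *)
  let X0 := F U0 in
  let xN0 := FN U0 in
  let ilqr_cost := fun U =>
    (1 / 2%:R) * qform QQ (X0 + (U - U0) *m JF)
    + (1 / 2%:R) * qform RR U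
    + (1 / 2%:R) * qform M (xN0 + (U - U0) *m JN) in
  let is_min := fun Ut => forall U, ilqr_cost Ut <= ilqr_cost U in
  let W := JF *m QQ *m JF^T + RR + JN *m M *m JN^T in
  let g := grad (Jd F FN QQ RR M) U0 in
  sym_pd W /\ (exists Ut, is_min Ut) /\
  forall Ut, is_min Ut ->
    (forall V, is_min V -> V = Ut) /\
    (Ut - U0)^T = - (invmx W *m g^T) /\
    (g != 0 -> (g *m (Ut - U0)^T) 0 0 < 0).

Proof.
move=> N0 s0 pQ pR pM df b0 h0 hRK huniq dF dFd QQ RR FN JF JN X0 xN0
  ilqr_cost is_min W g.
have sQQ : sym_psd QQ := @blkW_psd R N s n h b Q h0 b0 pQ.
have sRR : sym_pd RR := @blkW_pd R N s m h b Rm h0 b0 pR.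
have pW : sym_pd W := @W_pd R _ _ _ QQ RR M JF JN sQQ sRR pM.
have uW := @pd_unit R _ W pW.
have [sW pW'] := pW.
set K := JF *m QQ *m X0^T + RR *m U0^T + JN *m M *m xN0^T.
have gE : g = K^T.
  rewrite /g.
  have -> : Jd F FN QQ RR M = (fun y => (1 / 2%:R) * qform QQ (F y)
     + (1 / 2%:R) * qform RR y + (1 / 2%:R) * qform M (FN y)) by [].
  apply: grad_gen; [exact: sQQ.1 | exact: sRR.1 | exact: pM.1 | exact: dF | exact: dFd].
pose ds := - (invmx W *m g^T)^T.
have hd : W *m ds^T = - K.
  by rewrite /ds linearN /= trmxK mulmxN mulKVmx // gE trmxK.
have cf : forall U, ilqr_cost U =
    ((1 / 2%:R) * qform QQ X0 + (1 / 2%:R) * qform RR U0 + (1 / 2%:R) * qform M xN0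
    - (1 / 2%:R) * qform W ds) + (1 / 2%:R) * qform W (U - (U0 + ds)).
  exact: (@cost_form R _ _ _ QQ RR M JF JN X0 xN0 U0 W ds sQQ.1 sRR.1 pM.1 erefl hd).
have q0 : qform W 0 = 0 by rewrite /qform mul0mx mul0mx mxE.
have psdW : forall v, 0 <= qform W v.
  move=> v; have [->|/pW'/ltW//] := eqVneq v 0; by rewrite q0.
have minE : forall Ut, is_min Ut <-> Ut = U0 + ds.
  move=> Ut; split.
    move=> Hm; have := Hm (U0 + ds); rewrite !cf subrr q0 mulr0 addr0.
    rewrite gerDl => H; apply/eqP; rewrite -subr_eq0; apply/negPn/negP => /pW' H'.
    have : 0 < 1 / 2%:R * qform W (Ut - (U0 + ds)) by apply: mulr_gt0.
    by rewrite ltNge H.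
  move=> -> U; rewrite !cf subrr q0 mulr0 addr0 lerDl.
  by apply: mulr_ge0.
split; first exact: pW.
split; first by exists (U0 + ds); apply/minE.
move=> Ut /minE ->; split; first by move=> V /minE ->.
have -> : U0 + ds - U0 = ds by rewrite addrC addKr.
split; first by rewrite /ds linearN /= trmxK.
move=> g0.
set y := (invmx W *m g^T)^T.
have gy : g = y *m W.
  by rewrite -[g]trmxK /y -{1}(mulKVmx uW g^T) trmx_mul sW trmxK.
have y0 : y != 0.
  by apply: contraNneq g0 => y0; rewrite gy y0 mul0mx.
have -> : ds = - y by [].
rewrite linearN /= mulmxN mxE gy oppr_lt0.
exact: pW'.
Qed.
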